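(* In the one-dimensional perturbed elephant random walk with stops, suppose $\epsilon+r\neq1$ and $\gamma=\frac{1-\epsilon r}{2}$. Then for all $t\ge1$ $$\mathbb{E}[X_t^2]=\frac{t}{r(\epsilon+r)}-\frac{r\,\Gamma(t+1-\epsilon-r)}{(\epsilon+r)(\epsilon+r-\epsilon r)\Gamma(1-\epsilon-r)\Gamma(t)}-\frac{1}{\Gamma(1-\epsilon r)}\Big[\frac{1}{r(\epsilon+r)}-\frac{r}{(\epsilon+r)(\epsilon+r-\epsilon r)}\Big]\frac{\Gamma(t+1-\epsilon r)}{\Gamma(t)},$$ and hence $\displaystyle\lim_{t\to\infty}\frac{\mathbb{E}[X_t^2]}{t}=\frac{1}{r(\epsilon+r)}$.
   Context: One-dimensional perturbed elephant random walk with stops (perturbed ERWS): fix $p,q,r\in(0,1)$ with $p+q+r=1$, $\epsilon\in(0,1)$ and $s\in(0,1)$, and set $\gamma=p-q$. The steps $\sigma_1,\sigma_2,\dots$ take values in $\{-1,0,1\}$, $X_0=0$ and $X_t=\sigma_1+\dots+\sigma_t$. The first step satisfies $P(\sigma_1=1)=s$, $P(\sigma_1=-1)=1-s$. For $t\ge1$, conditionally on $\sigma_1,\dots,\sigma_t$, an index $k\in\{1,\dots,t\}$ is chosen uniformly at random. If $\sigma_k=\pm1$, then $\sigma_{t+1}=\sigma_k$ with probability $p$, $\sigma_{t+1}=-\sigma_k$ with probability $q$, and $\sigma_{t+1}=0$ with probability $r$. If $\sigma_k=0$, then $\sigma_{t+1}=1$ with probability $\epsilon/2$, $\sigma_{t+1}=-1$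 with probability $\epsilon/2$, and $\sigma_{t+1}=0$ with probability $1-\epsilon$. *)

(* Defs.v *)
From Stdlib Require Import Reals Lra List ZArith.
Open Scope R_scope.

(* A path of steps is stored MOST RECENT FIRST: [sigma_t; ...; sigma_1]. *)

(* transition kernel: probability that sigma_{t+1} = v given the
   remembered step sigma_k = a *)
Definition trans (p q r eps : R) (a v : Z) : R :=
  if Z.eqb a 0 then
    (if Z.eqb v 0 then 1 - eps
     else if Z.eqb v 1 then eps / 2
     else if Z.eqb v (-1) then eps / 2 else 0)
  else
    (if Z.eqb v a then p
     else if Z.eqb v (- a) then q
     else if Z.eqb v 0 then r else 0).

(* conditional probability of the next step v given the history h
   (h = [sigma_t; ...; sigma_1]); uniform choice of k in {1..t}. *)
Definition step_prob (p q r eps s : R) (h : list Z) (v : Z) : R :=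
  match h with
  | nil => if Z.eqb v 1 then s else if Z.eqb v (-1) then 1 - s else 0
  | _ => / INR (length h) *
         fold_right Rplus 0 (map (fun a => trans p q r eps a v) h)
  end.

Fixpoint path_prob (p q r eps s : R) (h : list Z) : R :=
  match h with
  | nil => 1
  | v :: h' => path_prob p q r eps s h' * step_prob p q r eps s h' v
  end.

Fixpoint paths (t : nat) : list (list Z) :=
  match t with
  | O => nil :: nil
  | S t' => flat_map (fun h => map (fun v => v :: h) ((-1)%Z :: 0%Z :: 1%Z :: nil))
                     (paths t')
  end.

Definition pos (h : list Z) : R := IZR (fold_right Z.add 0%Z h).

Definition second_moment (p q r eps s : R) (t : nat) : R :=
  fold_right Rplus 0
    (map (fun h => path_prob p q r eps s h * (pos h) ^ 2) (paths t)).

(* Gamma ratio  Gamma(t+1-a) / (Gamma(1-a) * Gamma(t))  for t >= 1, written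
   via the functional equation Gamma(x+1) = x Gamma(x):
   = (1-a)(2-a)...(t-a) / (t-1)!   (a not making 1-a a pole). *)
Fixpoint rising (a : R) (t : nat) : R :=
  match t with
  | O => 1
  | S t' => rising a t' * (INR t - a)
  end.

Definition gamma_ratio (a : R) (t : nat) : R :=
  rising a t / INR (fact (pred t)).

(* Main.v *)
Require Import Defs.
From Stdlib Require Import Reals.
From Stdlib Require Import Lra Lia List ZArith Arith.
Open Scope R_scope.

Definition sumL {A} (l : list A) (f : A -> R) : R := fold_right Rplus 0 (map f l).

Lemma sumL_app {A} (l1 l2 : list A) f : sumL (l1 ++ l2) f = sumL l1 f + sumL l2 f.
Proof. induction l1; simpl; unfold sumL in *; simpl; [ring| rewrite IHl1; ring]. Qed.

Lemma sumL_flat_map {A B} (l : list A) (F : A -> list B) f :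
  sumL (flat_map F l) f = sumL l (fun a => sumL (F a) f).
Proof. induction l; simpl; [reflexivity|]. rewrite sumL_app, IHl. reflexivity. Qed.

Lemma sumL_ext_in {A} (l : list A) f g : (forall x, In x l -> f x = g x) -> sumL l f = sumL l g.
Proof. induction l; intros H; simpl; [reflexivity|]. unfold sumL in *; simpl.
  rewrite H by (left; reflexivity). rewrite IHl; [reflexivity|]. intros; apply H; right; auto. Qed.

Lemma sumL_lin {A} (l : list A) c0 c1 c2 f g :
  sumL l (fun a => c0 + c1 * f a + c2 * g a) = c0 * INR (length l) + c1 * sumL l f + c2 * sumL l g.
Proof. induction l; unfold sumL in *. simpl; ring. change (length (a :: l)) with (S (length l)). rewrite S_INR. simpl. rewrite IHl. ring. Qed.

Lemma sumL_lin2 {A} (l : list A) c1 c2 f g :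
  sumL l (fun a => c1 * f a + c2 * g a) = c1 * sumL l f + c2 * sumL l g.
Proof. induction l; unfold sumL in *; simpl. ring. rewrite IHl. ring. Qed.

Lemma sumL_combo {A} (l : list A) f1 f2 f3 c1 c2 c3 :
  sumL l (fun a => f1 a * c1 + f2 a * c2 + f3 a * c3) = sumL l f1 * c1 + sumL l f2 * c2 + sumL l f3 * c3.
Proof. induction l; unfold sumL in *; simpl. ring. rewrite IHl. ring. Qed.

Definition valid (a : Z) := a = (-1)%Z \/ a = 0%Z \/ a = 1%Z.

Lemma paths_in t h : In h (paths t) -> length h = t /\ Forall valid h.
Proof.
  revert h; induction t; simpl; intros h H.
  - destruct H as [<-|[]]; split; auto.
  - apply in_flat_map in H as [h' [H1 H2]]. apply IHt in H1 as [L F].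
    simpl in H2. destruct H2 as [<-|[<-|[<-|[]]]]; simpl; split; try lia;
    constructor; auto; unfold valid; auto.
Qed.

Section S.
Variables p q r eps s : R.
Hypothesis hsum : p + q + r = 1.

Definition E t (f : list Z -> R) := sumL (paths t) (fun h => path_prob p q r eps s h * f h).

Definition V3 (h : list Z) (g : Z -> R) :=
  step_prob p q r eps s h (-1) * g (-1)%Z + step_prob p q r eps s h 0 * g 0%Z
  + step_prob p q r eps s h 1 * g 1%Z.

Lemma E_step t g : E (S t) g = E t (fun h => V3 h (fun v => g (v :: h))).
Proof.
  unfold E; simpl. rewrite sumL_flat_map. apply sumL_ext_in. intros h _.
  unfold sumL, V3; simpl. ring.
Qed.

Lemma E_ext t f g : (forall h, In h (paths t) -> f h = g h) -> E t f = E t g.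
Proof. intros H; apply sumL_ext_in; intros; rewrite H; auto. Qed.

Lemma E_lin t c0 c1 c2 f g :
  E t (fun h => c0 + c1 * f h + c2 * g h) = c0 * E t (fun _ => 1) + c1 * E t f + c2 * E t g.
Proof. unfold E. rewrite <- sumL_lin2. 
  induction (paths t); unfold sumL in *; simpl. ring. rewrite IHl. ring. Qed.

Lemma trans_lemma a x y z : valid a ->
  trans p q r eps a (-1) * (x + y * IZR (-1) + z * IZR (-1) ^ 2)
  + trans p q r eps a 0 * (x + y * IZR 0 + z * IZR 0 ^ 2)
  + trans p q r eps a 1 * (x + y * IZR 1 + z * IZR 1 ^ 2)
  = x + y * (p - q) * IZR a + z * ((p + q) * IZR a ^ 2 + eps * (1 - IZR a ^ 2)).
Proof.
  intros [H|[H|H]]; subst a; unfold trans; simpl. all: replace (IZR (-1)) with (-1) by reflexivity. all: try (replace r with (1-p-q) by lra); field.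
Qed.

Definition Pp (h : list Z) := sumL h (fun a => IZR a).
Definition Nn (h : list Z) := sumL h (fun a => IZR a ^ 2).

Lemma V3_lemma h x y z : h <> nil -> Forall valid h ->
  V3 h (fun v => x + y * IZR v + z * IZR v ^ 2) =
  x + y * (p - q) * Pp h / INR (length h)
    + z * ((p + q) * Nn h + eps * (INR (length h) - Nn h)) / INR (length h).
Proof.
  intros Hn HF. destruct h as [|b h']; [congruence|].
  set (h := b :: h').
  assert (Hl : INR (length h) <> 0) by (unfold h; change (length (b :: h')) with (S (length h')); rewrite S_INR; pose proof (pos_INR (length h')); lra).
  assert (Hsp : forall v, step_prob p q r eps s h v = / INR (length h) * sumL h (fun a => trans p q r eps a v)) by reflexivity.
  transitivity (/ INR (length h) * sumL h (fun a =>
    x + y * (p - q) * IZR a + z * ((p + q) * IZR a ^ 2 + eps * (1 - IZR a ^ 2)))).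
  - transitivity (/ INR (length h) * sumL h (fun a =>
       trans p q r eps a (-1) * (x + y * IZR (-1) + z * IZR (-1) ^ 2)
     + trans p q r eps a 0 * (x + y * IZR 0 + z * IZR 0 ^ 2)
     + trans p q r eps a 1 * (x + y * IZR 1 + z * IZR 1 ^ 2))).
    + unfold V3. rewrite !Hsp, sumL_combo. ring.
    + f_equal. apply sumL_ext_in. intros a Ha. apply trans_lemma. rewrite Forall_forall in HF; auto.
  - assert (E1 : sumL h (fun a => x + y * (p - q) * IZR a + z * ((p + q) * IZR a ^ 2 + eps * (1 - IZR a ^ 2)))
      = sumL h (fun a => (x + z * eps) + (y * (p - q)) * IZR a + (z * (p + q - eps)) * IZR a ^ 2))
      by (apply sumL_ext_in; intros; ring).
    rewrite E1, sumL_lin. unfold Pp, Nn. change (sumL h IZR) with (sumL h (fun a => IZR a)). field. auto.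
Qed.
End S.

Lemma pos_P h : Defs.pos h = Pp h.
Proof. induction h; unfold Defs.pos, Pp, sumL in *; simpl. reflexivity. rewrite plus_IZR, IHh. reflexivity. Qed.
Lemma pos_cons v h : Defs.pos (v :: h) = IZR v + Defs.pos h.
Proof. unfold Defs.pos; simpl. apply plus_IZR. Qed.
Lemma Nn_cons v h : Nn (v :: h) = IZR v ^ 2 + Nn h.
Proof. reflexivity. Qed.

Lemma gamma_step c t : (1 <= t)%nat ->
  gamma_ratio c (S t) = gamma_ratio c t * (INR (S t) - c) / INR t.
Proof.
  intros Ht. destruct t as [|t']; [lia|]. unfold gamma_ratio.
  change (rising c (S (S t'))) with (rising c (S t') * (INR (S (S t')) - c)).
  change (pred (S (S t'))) with (S t'). change (pred (S t')) with t'.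
  change (fact (S t')) with (S t' * fact t')%nat. rewrite mult_INR.
  pose proof (INR_fact_neq_0 t'). assert (INR (S t') <> 0) by (apply not_0_INR; lia).
  field. auto.
Qed.

Section S2.
Variables p q r eps s : R.
Hypothesis hsum : p + q + r = 1.

Notation E := (E p q r eps s).
Notation V3 := (V3 p q r eps s).

Lemma E0 f : E 0 f = f nil.
Proof. unfold E, sumL; simpl. ring. Qed.

Lemma V3_nonnil t h x y z : (1 <= t)%nat -> In h (paths t) ->
  V3 h (fun v => x + y * IZR v + z * IZR v ^ 2) =
  x + y * (p - q) * Defs.pos h / INR t
    + z * ((p + q) * Nn h + eps * (INR t - Nn h)) / INR t.
Proof.
  intros Ht Hin. destruct (paths_in t h Hin) as [L F].
  rewrite V3_lemma by (auto; intros ->; simpl in L; lia). rewrite L, pos_P. reflexivity.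
Qed.

Lemma One_t t : E t (fun _ => 1) = 1.
Proof.
  induction t. rewrite E0; reflexivity.
  rewrite E_step. destruct t.
  - rewrite E0. unfold V3, step_prob; simpl. ring.
  - transitivity (E (S t) (fun _ => 1)); [|exact IHt]. apply E_ext. intros h Hin.
    transitivity (V3 h (fun v => 1 + 0 * IZR v + 0 * IZR v ^ 2)).
    + unfold V3; ring.
    + rewrite (V3_nonnil (S t)) by (auto; lia). field. apply not_0_INR; lia.
Qed.

Lemma M_step t : (1 <= t)%nat ->
  E (S t) (fun h => Defs.pos h ^ 2) =
  eps + (1 + 2 * (p - q) / INR t) * E t (fun h => Defs.pos h ^ 2) + ((p + q - eps) / INR t) * E t Nn.
Proof.
  intros Ht. rewrite E_step.
  assert (Ht0 : INR t <> 0) by (apply not_0_INR; lia).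
  transitivity (E t (fun h => eps + (1 + 2 * (p - q) / INR t) * Defs.pos h ^ 2 + ((p + q - eps) / INR t) * Nn h)).
  - apply E_ext. intros h Hin.
    transitivity (V3 h (fun v => Defs.pos h ^ 2 + (2 * Defs.pos h) * IZR v + 1 * IZR v ^ 2)).
    + unfold V3. rewrite !pos_cons. ring.
    + rewrite (V3_nonnil t) by auto. field. auto.
  - rewrite E_lin, One_t. ring.
Qed.

Lemma N_step t : (1 <= t)%nat ->
  E (S t) Nn = eps + (1 + (p + q - eps) / INR t) * E t Nn.
Proof.
  intros Ht. rewrite E_step.
  assert (Ht0 : INR t <> 0) by (apply not_0_INR; lia).
  transitivity (E t (fun h => eps + 0 * Nn h + (1 + (p + q - eps) / INR t) * Nn h)).
  - apply E_ext. intros h Hin.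
    transitivity (V3 h (fun v => Nn h + 0 * IZR v + 1 * IZR v ^ 2)).
    + unfold V3. rewrite !Nn_cons. ring.
    + rewrite (V3_nonnil t) by auto. field. auto.
  - rewrite E_lin, One_t. ring.
Qed.

Lemma M1 : E 1 (fun h => Defs.pos h ^ 2) = 1.
Proof. rewrite E_step, E0. unfold V3, step_prob, Defs.pos; simpl. ring. Qed.
Lemma N1 : E 1 Nn = 1.
Proof. rewrite E_step, E0. unfold V3, step_prob, Nn, sumL; simpl. ring. Qed.
End S2.

Lemma closed_form (p q r eps s : R)
  (hr : 0 < r < 1) (hsum : p + q + r = 1)
  (heps : 0 < eps < 1)
  (hne : eps + r <> 1) (hgamma : p - q = (1 - eps * r) / 2) (t : nat) :
  (1 <= t)%nat ->
  E p q r eps s t Nn = eps * INR t / (eps + r) + r / ((eps + r) * (1 - (eps + r))) * gamma_ratio (eps + r) t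
  /\ E p q r eps s t (fun h => Defs.pos h ^ 2) =
       INR t / (r * (eps + r))
       - r / ((eps + r) * (eps + r - eps * r)) * gamma_ratio (eps + r) t
       - (1 / (r * (eps + r)) - r / ((eps + r) * (eps + r - eps * r)))
           * gamma_ratio (eps * r) t.
Proof.
  intros Ht. destruct t as [|t]; [lia|]. clear Ht.
  assert (Ha : eps + r <> 0) by lra.
  assert (Hb : eps + r - eps * r <> 0) by nra.
  assert (Hc : 1 - (eps + r) <> 0) by lra.
  assert (Hr : r <> 0) by lra.
  induction t.
  - rewrite N1, M1. unfold gamma_ratio; simpl. split; field; auto.
  - destruct IHt as [IN IM].
    assert (H1 : (1 <= S t)%nat) by lia.
    assert (Ht0 : INR (S t) <> 0) by (apply not_0_INR; lia).
    rewrite (N_step p q r eps s hsum (S t) H1), (M_step p q r eps s hsum (S t) H1), IN, IM.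
    rewrite !(gamma_step _ (S t) H1).
    replace (p + q) with (1 - r) by lra. rewrite hgamma.
    rewrite (S_INR (S t)).
    split; field; auto.
Qed.

Fixpoint Pr (c : R) (t : nat) : R :=
  match t with O => 1 | S t' => Pr c t' * (1 - c / INR (S t')) end.

Lemma G_Pr c t : (1 <= t)%nat -> gamma_ratio c t = INR t * Pr c t.
Proof.
  intros Ht. induction t as [|t IH]; [lia|]. destruct t as [|t].
  - unfold gamma_ratio; simpl. field.
  - assert (Ht0 : INR (S t) <> 0) by (apply not_0_INR; lia).
    assert (INR (fact t) <> 0) by apply INR_fact_neq_0.
    assert (gamma_ratio c (S (S t)) = gamma_ratio c (S t) * (INR (S (S t)) - c) / INR (S t)).
    { unfold gamma_ratio.
      change (rising c (S (S t))) with (rising c (S t) * (INR (S (S t)) - c)).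
      change (pred (S (S t))) with (S t). change (pred (S t)) with t.
      change (fact (S t)) with (S t * fact t)%nat. rewrite mult_INR. field. auto. }
    rewrite H0, IH by lia. change (Pr c (S (S t))) with (Pr c (S t) * (1 - c / INR (S (S t)))).
    assert (INR (S (S t)) <> 0) by (apply not_0_INR; lia).
    field. split; auto.
Qed.

Lemma exp_le x y : x <= y -> exp x <= exp y.
Proof. intros [H|H]. left; apply exp_increasing; auto. rewrite H; lra. Qed.

Lemma ln_bound x : 0 < x -> ln (1 + x) <= x.
Proof.
  intros Hx. left. rewrite <- (ln_exp x) at 2. apply ln_increasing. lra.
  apply exp_ineq1. lra.
Qed.

Lemma Pr_bound c K : 0 < c -> c <= INR K -> forall m,
  Rabs (Pr c (K + m)) <= Rabs (Pr c K) * exp (c * ln (INR K + 1)) * exp (- c * ln (INR (K + m) + 1)).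
Proof.
  intros Hc HK. induction m.
  - rewrite Nat.add_0_r. rewrite Rmult_assoc, <- exp_plus.
    replace (c * ln (INR K + 1) + - c * ln (INR K + 1)) with 0 by ring. rewrite exp_0. lra.
  - replace (K + S m)%nat with (S (K + m)) by lia.
    set (t := (K + m)%nat) in *.
    change (Pr c (S t)) with (Pr c t * (1 - c / INR (S t))).
    rewrite Rabs_mult.
    assert (Ht : INR t + 1 = INR (S t)) by (rewrite S_INR; reflexivity).
    assert (HtK : INR K <= INR t) by (apply le_INR; unfold t; lia).
    assert (Hpos : 0 < INR (S t)) by (rewrite <- Ht; pose proof (pos_INR t); lra).
    assert (H1 : 0 <= 1 - c / INR (S t)).
    { assert (c / INR (S t) <= 1). { apply (Rmult_le_reg_r (INR (S t))); auto.
        unfold Rdiv; rewrite Rmult_assoc, Rinv_l by lra. lra. } lra. }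
    rewrite (Rabs_right (1 - _)) by lra.
    assert (H2 : 1 - c / INR (S t) <= exp (- c * (ln (INR (S t) + 1) - ln (INR t + 1)))).
    { apply Rle_trans with (exp (- (c / INR (S t)))).
      - pose proof (exp_ineq1_le (- (c / INR (S t)))). lra.
      - apply exp_le. rewrite Ht. replace (ln (INR (S t) + 1) - ln (INR (S t))) with (ln (1 + / INR (S t))).
        + pose proof (ln_bound (/ INR (S t)) (Rinv_0_lt_compat _ Hpos)).
          unfold Rdiv. nra.
        + unfold Rminus. rewrite <- ln_Rinv by auto. rewrite <- ln_mult by (try apply Rinv_0_lt_compat; lra).
          f_equal. field. lra. }
    eapply Rle_trans.
    + apply Rmult_le_compat; [apply Rabs_pos | lra | apply IHm | apply H2].
    + rewrite Rmult_assoc, <- exp_plus. right. f_equal. f_equal. ring.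
Qed.

Lemma Pr_cv c : 0 < c -> Un_cv (Pr c) 0.
Proof.
  intros Hc e He.
  destruct (INR_unbounded c) as [K HK].
  set (A := Rabs (Pr c K) * exp (c * ln (INR K + 1))).
  assert (HA : 0 <= A) by (unfold A; pose proof (Rabs_pos (Pr c K)); pose proof (exp_pos (c * ln (INR K + 1))); nra).
  set (e' := e / (A + 1)).
  assert (He' : 0 < e') by (unfold e'; apply Rdiv_lt_0_compat; lra).
  destruct (INR_unbounded (exp (- ln e' / c))) as [N HN].
  exists (max K N). intros n Hn. unfold Rdist. rewrite Rminus_0_r.
  replace n with (K + (n - K))%nat by lia.
  eapply Rle_lt_trans. apply Pr_bound; lra.
  replace (K + (n - K))%nat with n by lia. fold A.
  assert (HN2 : INR N <= INR n) by (apply le_INR; lia).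
  assert (Hx : exp (- c * ln (INR n + 1)) < e').
  { rewrite <- (exp_ln e') by auto. apply exp_increasing.
    assert (- ln e' / c < ln (INR n + 1)).
    { rewrite <- (ln_exp (- ln e' / c)). apply ln_increasing. apply exp_pos. lra. }
    apply (Rmult_lt_compat_l c) in H; auto. unfold Rdiv in H.
    rewrite <- Rmult_assoc, (Rmult_comm c), Rmult_assoc, Rinv_r, Rmult_1_r in H by lra. lra. }
  assert (e = e' * (A + 1)) by (unfold e'; field; lra).
  pose proof (exp_pos (- c * ln (INR n + 1))). nra.
Qed.

Lemma cv_const (k : R) : Un_cv (fun _ => k) k.
Proof. intros e He. exists 0%nat. intros. unfold Rdist. rewrite Rminus_diag, Rabs_R0. lra. Qed.

Theorem mainTheorem8 (p q r eps s : R)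
  (hp : 0 < p < 1) (hq : 0 < q < 1) (hr : 0 < r < 1) (hsum : p + q + r = 1)
  (heps : 0 < eps < 1) (hs : 0 < s < 1)
  (hne : eps + r <> 1) (hgamma : p - q = (1 - eps * r) / 2) :
  (forall t : nat, (1 <= t)%nat ->
     second_moment p q r eps s t =
       INR t / (r * (eps + r))
       - r / ((eps + r) * (eps + r - eps * r)) * gamma_ratio (eps + r) t
       - (1 / (r * (eps + r)) - r / ((eps + r) * (eps + r - eps * r)))
           * gamma_ratio (eps * r) t)
  /\ Un_cv (fun t => second_moment p q r eps s t / INR t) (1 / (r * (eps + r))).
Proof.
  assert (Hform : forall t : nat, (1 <= t)%nat ->
     second_moment p q r eps s t =
       INR t / (r * (eps + r))
       - r / ((eps + r) * (eps + r - eps * r)) * gamma_ratio (eps + r) t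
       - (1 / (r * (eps + r)) - r / ((eps + r) * (eps + r - eps * r)))
           * gamma_ratio (eps * r) t).
  { intros t Ht. change (second_moment p q r eps s t) with (E p q r eps s t (fun h => Defs.pos h ^ 2)).
    apply (closed_form p q r eps s hr hsum heps hne hgamma t Ht). }
  split; [exact Hform|].
  set (K1 := r / ((eps + r) * (eps + r - eps * r))).
  set (K2 := 1 / (r * (eps + r)) - K1).
  assert (Hcv : Un_cv (fun n => 1 / (r * (eps + r)) - K1 * Pr (eps + r) n - K2 * Pr (eps * r) n)
                  (1 / (r * (eps + r)) - K1 * 0 - K2 * 0)).
  { apply CV_minus. apply CV_minus. apply cv_const.
    apply CV_mult. apply cv_const. apply Pr_cv. lra.
    apply CV_mult. apply cv_const. apply Pr_cv. nra. }
  replace (1 / (r * (eps + r)) - K1 * 0 - K2 * 0) with (1 / (r * (eps + r))) in Hcv by ring.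
  intros e He. destruct (Hcv e He) as [N HN]. exists (max N 1). intros n Hn.
  assert (Hn1 : (1 <= n)%nat) by lia.
  rewrite Hform by auto. rewrite !(G_Pr _ n Hn1). fold K1. fold K2.
  assert (INR n <> 0) by (apply not_0_INR; lia).
  replace ((INR n / (r * (eps + r)) - K1 * (INR n * Pr (eps + r) n) - K2 * (INR n * Pr (eps * r) n)) / INR n)
    with (1 / (r * (eps + r)) - K1 * Pr (eps + r) n - K2 * Pr (eps * r) n).
  - apply HN. lia.
  - field. split; [auto|]. all: try lra. all: try nra.
Qed.
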